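(* Let $H(s)=K\,\frac{\prod_{i=1}^{n}(s-z_i)}{\prod_{i=1}^{n}(s-p_i)}$ with $K>0$ and real zeros $z=(z_1,\dots,z_n)\in\mathbb{R}^n$ and real poles $p=(p_1,\dots,p_n)\in\mathbb{R}^n$ (so the numerator and denominator have the same degree $n$). Suppose there exist $\mu\in\mathbb{N}=\{1,2,\dots\}$ and $\delta>-\min_{i,j}\{p_i,z_j\}$ such that $$(p+\delta)^{\mu}\succ_w (z+\delta)^{\mu}$$ and $$\sum_{i=1}^n (p_i+\delta)^k\geq \sum_{i=1}^n (z_i+\delta)^k\quad\text{for all }k\in\{1,\dots,\mu-1\}.$$ Then $H$ is logarithmically completely monotonic.
   Context: For $x\in\mathbb{R}^n$ and scalar $\delta$, $(x+\delta)^\mu$ denotes the vector with components $(x_i+\delta)^\mu$. For $x\in\mathbb{R}^n$, $x^{\downarrow}$ is the vector of its components sorted in descending order; $x\succ_w y$ (weak majorization) means $\sum_{i=1}^k x^{\downarrow}_i\geq\sum_{i=1}^k y^{\downarrow}_i$ for all $k=1,\dots,n$. $H$ is logarithmically completely monotonic (LCM) if $H(s)>0$ and $(-1)^k[\log H(s)]^{(k)}\geq 0$ for all $k\in\{1,2,\dots\}$ and all $s\in(\sigma(H),+\infty)$, where $\sigma(H)=\max_i p_i$. *)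

(* Defs.v *)
From Stdlib Require Import Reals Lra List Permutation Sorted.
From Coquelicot Require Import Coquelicot.
Open Scope R_scope.

Definition lsum (l : list R) : R := fold_right Rplus 0 l.
Definition lprod (l : list R) : R := fold_right Rmult 1 l.

Definition shift_pow (x : list R) (delta : R) (mu : nat) : list R :=
  map (fun xi => (xi + delta) ^ mu) x.

Definition is_desc_sort (xs x : list R) : Prop :=
  Permutation xs x /\ Sorted Rge xs.

Definition weak_majorizes (x y : list R) : Prop :=
  forall xs ys, is_desc_sort xs x -> is_desc_sort ys y ->
  forall k : nat, (1 <= k <= length x)%nat ->
    lsum (firstn k xs) >= lsum (firstn k ys).

Definition rat_fun (K : R) (z p : list R) (s : R) : R :=
  K * lprod (map (fun zi => s - zi) z) / lprod (map (fun pi => s - pi) p).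

Definition sigmaH (p : list R) : R := fold_right Rmax (hd 0 p) p.

Definition LCM (H : R -> R) (sigma : R) : Prop :=
  forall s, sigma < s ->
    H s > 0 /\
    forall k : nat, (1 <= k)%nat ->
      (-1) ^ k * Derive_n (fun t => ln (H t)) k s >= 0.

(* Main.v *)
Require Import Defs.
From Stdlib Require Import Reals Lra List Permutation Sorted Mergesort Orders Lia.
From Coquelicot Require Import Coquelicot.
Open Scope R_scope.
Import ListNotations.

Module RDesc <: Orders.TotalLeBool.
  Definition t := R.
  Definition leb (x y : R) : bool := if Rle_dec y x then true else false.
  Lemma leb_total : forall x y, leb x y = true \/ leb y x = true.
  Proof. intros x y; unfold leb; destruct (Rle_dec y x); destruct (Rle_dec x y); auto; lra. Qed.
End RDesc.
Module RSort := Sort RDesc.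

Lemma Sorted_map_mono {A : Type} (R1 : A -> A -> Prop) (R2 : R -> R -> Prop) (f : A -> R) (l : list A) :
  (forall x y, In x l -> In y l -> R1 x y -> R2 (f x) (f y)) -> Sorted R1 l -> Sorted R2 (map f l).
Proof.
  induction l as [|a l IH]; intros Hf HS; simpl; constructor.
  - apply Sorted_inv in HS; destruct HS. apply IH; auto.
    intros; apply Hf; simpl; auto.
  - apply Sorted_inv in HS; destruct HS as [_ HH].
    destruct l as [|b l]; simpl; constructor. inversion HH; subst.
    apply Hf; simpl; auto.
Qed.

Lemma exists_desc_sort (l : list R) : exists xs, is_desc_sort xs l.
Proof.
  exists (RSort.sort l); split.
  - apply Permutation_sym, RSort.Permuted_sort.
  - rewrite <- (map_id (RSort.sort l)).
    apply (Sorted_map_mono (fun x y => is_true (RDesc.leb x y)) Rge (fun x => x)); [|apply RSort.Sorted_sort].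
    intros x y _ _ H. unfold is_true, RDesc.leb in H. destruct (Rle_dec y x); [lra|discriminate].
Qed.

Lemma pow_lt_strict (x y : R) (n : nat) : 0 <= x < y -> (1 <= n)%nat -> x ^ n < y ^ n.
Proof.
  intros Hxy Hn. induction n as [|n IH]; [lia|].
  destruct n. simpl; lra.
  assert (x ^ S n < y ^ S n) by (apply IH; lia).
  assert (0 <= x ^ S n) by (apply pow_le; lra).
  change (x * x ^ S n < y * y ^ S n). nra.
Qed.

Fixpoint ev (T : R) (w : list R) (x : R) : R :=
  match w with [] => 0 | w0 :: w' => (w0 + ev T w' x) / (T - x) end.
Fixpoint Lop (T : R) (w : list R) : list R :=
  match w with [] => [] | w0 :: w' => ((w0 + ev T w' 0) / T) :: Lop T w' end.
Fixpoint dv (T : R) (w : list R) (x : R) : R :=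
  match w with [] => 0 | w0 :: w' => dv T w' x / (T - x) + (w0 + ev T w' x) / (T - x) ^ 2 end.

Definition nonneg (w : list R) := List.Forall (fun a => 0 <= a) w.

Lemma ev_nonneg T w x : nonneg w -> x < T -> 0 <= ev T w x.
Proof.
  induction w as [|a w IH]; intros Hw Hx; simpl; [lra|].
  inversion Hw as [|? ? Ha Hw2]; subst. unfold Rdiv. apply Rmult_le_pos.
  - specialize (IH Hw2 Hx); lra.
  - left; apply Rinv_0_lt_compat; lra.
Qed.

Lemma ev_mono T w x y : nonneg w -> x <= y -> y < T -> ev T w x <= ev T w y.
Proof.
  induction w as [|a w IH]; intros Hw Hxy Hy; simpl; [lra|].
  inversion Hw as [|? ? Ha Hw2]; subst. unfold Rdiv.
  assert (0 <= ev T w x) by (apply ev_nonneg; auto; lra).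
  specialize (IH Hw2 Hxy Hy).
  apply Rmult_le_compat; try lra.
  - left; apply Rinv_0_lt_compat; lra.
  - apply Rinv_le_contravar; lra.
Qed.

Lemma ev_L T w x : 0 < T -> x < T -> ev T w x = ev T w 0 + x * ev T (Lop T w) x.
Proof.
  intros HT Hx. induction w as [|a w IH]; simpl; [ring|].
  rewrite IH. field. split; lra.
Qed.

Lemma Lop_nonneg T w : 0 < T -> nonneg w -> nonneg (Lop T w).
Proof.
  intros HT. induction w as [|a w IH]; intros Hw; simpl; constructor.
  - inversion Hw as [|? ? Ha Hw2]; subst. unfold Rdiv. apply Rmult_le_pos.
    + assert (0 <= ev T w 0) by (apply ev_nonneg; auto). lra.
    + left; apply Rinv_0_lt_compat; lra.
  - inversion Hw as [|? ? Ha Hw2]; subst; apply IH; exact Hw2.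
Qed.

Lemma iter_Lop_nonneg T w m : 0 < T -> nonneg w -> nonneg (Nat.iter m (Lop T) w).
Proof.
  intros HT Hw; induction m; simpl; auto. apply Lop_nonneg; auto.
Qed.

Lemma is_der_const (a x : R) : is_derive (fun _ : R => a) x 0.
Proof. apply is_derive_Reals; apply derivable_pt_lim_const. Qed.
Lemma is_der_eq (f : R -> R) x l l' : is_derive f x l -> l = l' -> is_derive f x l'.
Proof. intros H ->; exact H. Qed.

Lemma dv_derive T w x : x < T -> is_derive (ev T w) x (dv T w x).
Proof.
  intros Hx. induction w as [|a w IH]; simpl.
  - apply is_der_const.
  - assert (H1 := is_derive_plus (fun _ => a) (ev T w) x 0 (dv T w x) (is_der_const a x) IH).
    assert (H2 := is_derive_minus (fun _ => T) (fun t => t) x 0 1 (is_der_const T x) (is_derive_id x)).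
    assert (H3 := is_derive_div _ _ _ _ _ H1 H2 ltac:(simpl; unfold minus, plus, opp; simpl; lra)).
    refine (is_der_eq _ _ _ _ H3 _). simpl. unfold minus, plus, opp; simpl. field. lra.
Qed.

Lemma dv_nonneg T w x : nonneg w -> x < T -> 0 <= dv T w x.
Proof.
  induction w as [|a w IH]; intros Hw Hx; simpl; [lra|].
  inversion Hw as [|? ? Ha Hw2]; subst.
  assert (0 <= ev T w x) by (apply ev_nonneg; auto).
  specialize (IH Hw2 Hx).
  assert (0 < T - x) by lra.
  assert (0 < (T - x)^2) by (apply pow_lt; lra).
  apply Rplus_le_le_0_compat; unfold Rdiv; apply Rmult_le_pos; try lra;
  left; apply Rinv_0_lt_compat; lra.
Qed.

Lemma dv_mono T w x y : nonneg w -> x <= y -> y < T -> dv T w x <= dv T w y.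
Proof.
  induction w as [|a w IH]; intros Hw Hxy Hy; simpl; [lra|].
  inversion Hw as [|? ? Ha Hw2]; subst.
  assert (0 <= ev T w x) by (apply ev_nonneg; auto; lra).
  assert (ev T w x <= ev T w y) by (apply ev_mono; auto).
  assert (0 <= dv T w x) by (apply dv_nonneg; auto; lra).
  specialize (IH Hw2 Hxy Hy).
  assert (0 < (T - y)^2) by (apply pow_lt; lra).
  assert ((T - y)^2 <= (T-x)^2) by (apply pow_incr; lra).
  unfold Rdiv; apply Rplus_le_compat; apply Rmult_le_compat; try lra;
  try (left; apply Rinv_0_lt_compat; try lra; apply pow_lt; lra);
  apply Rinv_le_contravar; lra.
Qed.

Fixpoint Pp (T : R) (w : list R) (m : nat) (x : R) : R :=
  match m with O => 0 | S m' => Pp T w m' x + ev T (Nat.iter m' (Lop T) w) 0 * x ^ m' end.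

Lemma ev_decomp T w m x : 0 < T -> x < T ->
  ev T w x = Pp T w m x + x ^ m * ev T (Nat.iter m (Lop T) w) x.
Proof.
  intros HT Hx. induction m as [|m IH]; simpl.
  - ring.
  - rewrite IH. rewrite (ev_L T (Nat.iter m (Lop T) w) x HT Hx). ring.
Qed.

Definition Gf T W mu y := y ^ mu * ev T W y.
Definition cf T W mu y := ev T W y + y * dv T W y / INR mu.

Lemma cf_nonneg T W mu y : (1 <= mu)%nat -> nonneg W -> 0 <= y < T -> 0 <= cf T W mu y.
Proof.
  intros Hmu HW Hy. unfold cf.
  assert (0 < INR mu) by (apply lt_0_INR; lia).
  assert (0 <= ev T W y) by (apply ev_nonneg; auto; lra).
  assert (0 <= dv T W y) by (apply dv_nonneg; auto; lra).
  assert (0 <= y * dv T W y / INR mu).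
  { unfold Rdiv; apply Rmult_le_pos; [apply Rmult_le_pos; lra|left; apply Rinv_0_lt_compat; lra]. }
  lra.
Qed.

Lemma cf_mono T W mu x y : (1 <= mu)%nat -> nonneg W -> 0 <= x -> x <= y -> y < T ->
  cf T W mu x <= cf T W mu y.
Proof.
  intros Hmu HW Hx Hxy Hy. unfold cf.
  assert (0 < INR mu) by (apply lt_0_INR; lia).
  assert (ev T W x <= ev T W y) by (apply ev_mono; auto).
  assert (0 <= dv T W x) by (apply dv_nonneg; auto; lra).
  assert (dv T W x <= dv T W y) by (apply dv_mono; auto).
  assert (x * dv T W x <= y * dv T W y) by (apply Rmult_le_compat; lra).
  unfold Rdiv. assert (0 < / INR mu) by (apply Rinv_0_lt_compat; lra).
  nra.
Qed.

Lemma tangent T W mu a b : (1 <= mu)%nat -> nonneg W -> 0 < a < T -> 0 < b < T ->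
  Gf T W mu a - Gf T W mu b >= cf T W mu b * (a ^ mu - b ^ mu).
Proof.
  intros Hmu HW Ha Hb.
  set (c0 := cf T W mu b).
  set (D := fun y => Gf T W mu y - c0 * y ^ mu).
  set (dD := fun y => (INR mu * 1 * y ^ pred mu) * ev T W y + y ^ mu * dv T W y
                      - c0 * (INR mu * 1 * y ^ pred mu)).
  assert (Hder : forall y, y < T -> is_derive D y (dD y)).
  { intros y Hy. unfold D, dD, Gf.
    assert (Hp := is_derive_pow (fun t => t) mu y 1 (is_derive_id y)).
    assert (H1 := is_derive_mult _ _ _ _ _ Hp (dv_derive T W y Hy) (fun u v => Rmult_comm u v)).
    assert (H2 := is_derive_scal _ _ c0 _ Hp).
    assert (H3 := is_derive_minus _ _ _ _ _ H1 H2).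
    refine (is_der_eq _ _ _ _ H3 _). simpl. unfold minus, plus, opp, mult, scal; simpl.
    unfold mult; simpl. ring. }
  destruct (MVT_gen D b a dD) as [c [Hc Heq]].
  - intros x Hx. apply Hder. assert (Rmax b a < T) by (apply Rmax_lub_lt; lra). lra.
  - intros x Hx. apply continuity_pt_filterlim. apply (ex_derive_continuous (K:=R_AbsRing) (V:=R_NormedModule)).
    eexists. apply Hder. assert (Rmax b a < T) by (apply Rmax_lub_lt; lra). lra.
  - assert (Hc0 : 0 < c).
    { assert (0 < Rmin b a) by (apply Rmin_glb_lt; lra). lra. }
    assert (HcT : c < T) by (assert (Rmax b a < T) by (apply Rmax_lub_lt; lra); lra).
    destruct mu as [|m]; [lia|].
    assert (HdD : dD c = INR (S m) * c ^ m * (cf T W (S m) c - c0)).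
    { unfold dD, cf. simpl pred. simpl pow. field. apply not_0_INR. lia. }
    unfold D in Heq. unfold c0 in *. rewrite HdD in Heq.
    assert (0 < INR (S m)) by (apply lt_0_INR; lia).
    assert (0 <= c ^ m) by (apply pow_le; lra).
    assert (0 <= INR (S m) * c ^ m) by (apply Rmult_le_pos; lra).
    destruct (Rle_lt_dec b a) as [Hba|Hab].
    + rewrite Rmin_left in Hc by lra. rewrite Rmax_right in Hc by lra.
      assert (cf T W (S m) b <= cf T W (S m) c) by (apply cf_mono; lra || lia || auto).
      assert (0 <= INR (S m) * c ^ m * (cf T W (S m) c - cf T W (S m) b) * (a - b)).
      { apply Rmult_le_pos; [apply Rmult_le_pos|]; lra. }
      lra.
    + rewrite Rmin_right in Hc by lra. rewrite Rmax_left in Hc by lra.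
      assert (cf T W (S m) c <= cf T W (S m) b) by (apply cf_mono; lra || lia || auto).
      assert (0 <= INR (S m) * c ^ m * (cf T W (S m) b - cf T W (S m) c) * (b - a)).
      { apply Rmult_le_pos; [apply Rmult_le_pos|]; lra. }
      nra.
Qed.

Lemma lsum_perm l l' : Permutation l l' -> lsum l = lsum l'.
Proof. induction 1; simpl; lra. Qed.

Lemma lsum_map_plus (f g : R -> R) l :
  lsum (map (fun x => f x + g x) l) = lsum (map f l) + lsum (map g l).
Proof. induction l; simpl; lra. Qed.

Lemma lsum_map_scal (c : R) (f : R -> R) l :
  lsum (map (fun x => c * f x) l) = c * lsum (map f l).
Proof. induction l; simpl; lra. Qed.

Lemma lsum_pow0 l : lsum (map (fun x => x ^ 0) l) = INR (length l).
Proof. induction l; simpl length; [simpl; lra|]. rewrite S_INR. simpl. simpl in IHl. lra. Qed.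

Fixpoint wsum (w a b : list R) : R :=
  match w, a, b with
  | w0 :: w', a0 :: a', b0 :: b' => w0 * (a0 - b0) + wsum w' a' b'
  | _, _, _ => 0 end.

Lemma abel w : forall a b, length a = length w -> length b = length w -> Sorted Rge w ->
  List.Forall (fun x => 0 <= x) w ->
  (forall k, (1 <= k <= length w)%nat -> lsum (firstn k a) >= lsum (firstn k b)) ->
  wsum w a b >= 0.
Proof.
  induction w as [|w0 w IH]; intros a b Ha Hb HS Hpos Hk; [simpl; lra|].
  destruct a as [|a0 a]; [discriminate|]. destruct b as [|b0 b]; [discriminate|].
  simpl in Ha, Hb. injection Ha as Ha. injection Hb as Hb.
  assert (H1 := Hk 1%nat ltac:(simpl; lia)). simpl in H1.
  inversion Hpos as [|? ? Hw0 Hpos']; subst.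
  destruct w as [|w1 w].
  - destruct a; [|discriminate]. destruct b; [|discriminate]. simpl. nra.
  - destruct a as [|a1 a]; [discriminate|]. destruct b as [|b1 b]; [discriminate|].
    simpl in Ha, Hb. injection Ha as Ha. injection Hb as Hb.
    apply Sorted_inv in HS. destruct HS as [HS HH]. inversion HH as [|? ? Hw01]; subst.
    assert (IH' := IH ((a0 + a1) :: a) ((b0 + b1) :: b)).
    simpl in IH'. assert (IH'' : (w1 * (a0 + a1 - (b0 + b1)) + wsum w a b >= 0)).
    { apply IH'; auto. intros k Hk'. destruct k as [|k]; [lia|].
      assert (Hk2 := Hk (S (S k)) ltac:(simpl; lia)). simpl in Hk2 |- *. lra. }
    simpl. nra.
Qed.

Lemma tomic T W mu a b : (1 <= mu)%nat -> nonneg W -> length a = length b ->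
  (forall x, In x (a ++ b) -> 0 < x < T) ->
  lsum (map (Gf T W mu) a) - lsum (map (Gf T W mu) b) >=
  wsum (map (cf T W mu) b) (map (fun x => x ^ mu) a) (map (fun x => x ^ mu) b).
Proof.
  intros Hmu HW. revert b. induction a as [|a0 a IH]; intros b Hl Hin;
  destruct b as [|b0 b]; try discriminate; simpl; [lra|].
  injection Hl as Hl.
  assert (Ht := tangent T W mu a0 b0 Hmu HW (Hin a0 ltac:(simpl; auto))
                 (Hin b0 ltac:(simpl; rewrite in_app_iff; simpl; auto))).
  assert (IH' := IH b Hl ltac:(intros x Hx; apply Hin; simpl; rewrite in_app_iff in *; simpl; tauto)).
  lra.
Qed.

Fixpoint ek (m : nat) : list R := match m with O => [1] | S m' => 0 :: ek m' end.

Lemma ek_nonneg m : nonneg (ek m).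
Proof. induction m; simpl; constructor; auto; lra. Qed.

Lemma ev_ek T m x : x < T -> ev T (ek m) x = / (T - x) ^ (S m).
Proof.
  intros Hx. assert (T - x <> 0) by lra.
  induction m as [|m IH]; simpl ek; simpl ev.
  - simpl. field. auto.
  - rewrite IH. simpl. field. split; auto. apply pow_nonzero; auto.
Qed.

Lemma lsum_map0 (l : list R) : lsum (map (fun _ => 0) l) = 0.
Proof. induction l; simpl; lra. Qed.

Lemma ineq_main T m mu xs ys : (1 <= mu)%nat -> length xs = length ys ->
  (forall x, In x (xs ++ ys) -> 0 < x < T) ->
  (forall j, (1 <= j <= mu - 1)%nat -> lsum (map (fun x => x ^ j) xs) >= lsum (map (fun x => x ^ j) ys)) ->
  weak_majorizes (map (fun x => x ^ mu) xs) (map (fun x => x ^ mu) ys) ->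
  lsum (map (fun x => / (T - x) ^ (S m)) xs) >= lsum (map (fun x => / (T - x) ^ (S m)) ys).
Proof.
  intros Hmu Hlen Hin Hpw Hmaj.
  destruct xs as [|x0 xs0] eqn:Exs.
  { destruct ys; [simpl; lra|discriminate]. }
  rewrite <- Exs in *.
  assert (HT : 0 < T) by (assert (H := Hin x0 ltac:(subst; simpl; auto)); lra).
  set (w := ek m). set (W := Nat.iter mu (Lop T) w).
  assert (HW : nonneg W) by (apply iter_Lop_nonneg; auto; apply ek_nonneg).
  assert (Hdec : forall l, (forall x, In x l -> 0 < x < T) ->
     map (fun x => / (T - x) ^ (S m)) l = map (fun x => Pp T w mu x + Gf T W mu x) l).
  { intros l Hl. apply map_ext_in. intros x Hx. specialize (Hl x Hx).
    rewrite <- ev_ek by lra. unfold Gf, W. apply ev_decomp; lra. }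
  rewrite !Hdec by (intros x Hx; apply Hin; rewrite in_app_iff; auto).
  rewrite !lsum_map_plus.
  assert (HP : forall j, (j <= mu)%nat -> lsum (map (Pp T w j) xs) >= lsum (map (Pp T w j) ys)).
  { induction j as [|j IHj]; intros Hj.
    - rewrite (map_ext (Pp T w 0) (fun _ => 0) (fun _ => eq_refl) xs), (map_ext (Pp T w 0) (fun _ => 0) (fun _ => eq_refl) ys). rewrite !lsum_map0. lra.
    - set (c := ev T (Nat.iter j (Lop T) w) 0).
      rewrite (map_ext (Pp T w (S j)) (fun x => Pp T w j x + c * x ^ j) (fun _ => eq_refl) xs).
      rewrite (map_ext (Pp T w (S j)) (fun x => Pp T w j x + c * x ^ j) (fun _ => eq_refl) ys).
      rewrite !lsum_map_plus, !lsum_map_scal.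
      assert (Hc : 0 <= c) by (apply ev_nonneg; [apply iter_Lop_nonneg; [exact HT|apply ek_nonneg]|exact HT]).
      assert (Hs : lsum (map (fun x => x ^ j) xs) >= lsum (map (fun x => x ^ j) ys)).
      { destruct j as [|j]. rewrite !lsum_pow0, Hlen. lra. apply Hpw. lia. }
      specialize (IHj ltac:(lia)). assert (c * lsum (map (fun x => x ^ j) xs) >= c * lsum (map (fun x => x ^ j) ys)) by (apply Rmult_ge_compat_l; lra). lra. }
  assert (HP' := HP mu (le_n _)).
  destruct (exists_desc_sort xs) as [xs' [Pxs Sxs]].
  destruct (exists_desc_sort ys) as [ys' [Pys Sys]].
  rewrite (lsum_perm (map (Gf T W mu) xs) (map (Gf T W mu) xs')) by (apply Permutation_map, Permutation_sym; auto).
  rewrite (lsum_perm (map (Gf T W mu) ys) (map (Gf T W mu) ys')) by (apply Permutation_map, Permutation_sym; auto).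
  assert (Lx := Permutation_length Pxs). assert (Ly := Permutation_length Pys).
  assert (Hin' : forall x, In x (xs' ++ ys') -> 0 < x < T).
  { intros x Hx. apply Hin. rewrite in_app_iff in *. destruct Hx as [Hx|Hx].
    left; eapply Permutation_in; eauto. right; eapply Permutation_in; eauto. }
  assert (Htom := tomic T W mu xs' ys' Hmu HW ltac:(lia) Hin').
  assert (Hab : wsum (map (cf T W mu) ys') (map (fun x => x ^ mu) xs') (map (fun x => x ^ mu) ys') >= 0).
  { apply abel.
    - rewrite !length_map; lia.
    - rewrite !length_map; lia.
    - apply Sorted_map_mono with (R1 := Rge); auto.
      intros x y Hx Hy Hxy. apply Rle_ge. apply cf_mono; auto.
      + assert (0 < y < T) by (apply Hin'; rewrite in_app_iff; auto). lra.
      + lra.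
      + assert (0 < x < T) by (apply Hin'; rewrite in_app_iff; auto). lra.
    - apply Forall_forall. intros c Hc. apply in_map_iff in Hc. destruct Hc as [y [<- Hy]].
      apply cf_nonneg; auto. assert (0 < y < T) by (apply Hin'; rewrite in_app_iff; auto). lra.
    - intros k Hk. apply Hmaj.
      + split. apply Permutation_map; auto.
        apply Sorted_map_mono with (R1 := Rge); auto.
        intros x y Hx Hy Hxy. apply Rle_ge. apply pow_incr.
        assert (0 < y < T) by (apply Hin'; rewrite in_app_iff; auto). lra.
      + split. apply Permutation_map; auto.
        apply Sorted_map_mono with (R1 := Rge); auto.
        intros x y Hx Hy Hxy. apply Rle_ge. apply pow_incr.
        assert (0 < y < T) by (apply Hin'; rewrite in_app_iff; auto). lra.
      + rewrite length_map in *. lia. }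
  lra.
Qed.

Lemma fold_max_ge (d : R) (l : list R) : forall a, In a l -> a <= fold_right Rmax d l.
Proof.
  induction l as [|b l IH]; intros a Ha; simpl in *; [contradiction|].
  destruct Ha as [<-|Ha]; [apply Rmax_l|]. eapply Rle_trans; [apply IH; auto|apply Rmax_r].
Qed.

Lemma maj_max mu xs ys : (1 <= mu)%nat -> xs <> [] -> length xs = length ys ->
  (forall x, In x (xs ++ ys) -> 0 < x) ->
  weak_majorizes (map (fun x => x ^ mu) xs) (map (fun x => x ^ mu) ys) ->
  forall y, In y ys -> exists x, In x xs /\ y <= x.
Proof.
  intros Hmu Hne Hlen Hpos Hmaj y Hy.
  destruct (exists_desc_sort xs) as [xs' [Pxs Sxs]].
  destruct (exists_desc_sort ys) as [ys' [Pys Sys]].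
  assert (Hin' : forall x, In x (xs' ++ ys') -> 0 < x).
  { intros x Hx. apply Hpos. rewrite in_app_iff in *. destruct Hx as [Hx|Hx].
    left; eapply Permutation_in; eauto. right; eapply Permutation_in; eauto. }
  assert (SX : Sorted Rge (map (fun x => x ^ mu) xs')).
  { apply Sorted_map_mono with (R1 := Rge); auto.
    intros a b Ha Hb Hab. apply Rle_ge. apply pow_incr.
    assert (0 < b) by (apply Hin'; rewrite in_app_iff; auto). lra. }
  assert (SY : Sorted Rge (map (fun x => x ^ mu) ys')).
  { apply Sorted_map_mono with (R1 := Rge); auto.
    intros a b Ha Hb Hab. apply Rle_ge. apply pow_incr.
    assert (0 < b) by (apply Hin'; rewrite in_app_iff; auto). lra. }
  assert (H1 := Hmaj _ _ (conj (Permutation_map _ Pxs) SX) (conj (Permutation_map _ Pys) SY) 1%nat).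
  destruct xs as [|x0 xs0]; [congruence|].
  destruct xs' as [|a0 xs'']. { apply Permutation_length in Pxs; discriminate. }
  destruct ys' as [|b0 ys'']. { apply Permutation_sym in Pys. apply (Permutation_in _ Pys) in Hy. contradiction. }
  simpl in H1. rewrite length_map in H1. specialize (H1 ltac:(simpl; lia)).
  assert (Hyb : y <= b0).
  { apply Permutation_sym in Pys. apply (Permutation_in _ Pys) in Hy.
    apply Sorted_StronglySorted in Sys; [|intros u v w; lra].
    destruct Hy as [<-|Hy]; [lra|]. apply StronglySorted_inv in Sys. destruct Sys as [_ HF].
    rewrite Forall_forall in HF. specialize (HF y Hy). lra. }
  assert (Ha0 : 0 < a0) by (apply Hin'; simpl; auto).
  assert (Hb0 : 0 < b0) by (apply Hin'; rewrite in_app_iff; simpl; auto).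
  assert (Hin0 : In a0 (x0 :: xs0)) by (eapply Permutation_in; [exact Pxs|simpl; auto]).
  assert (Hle : y <= a0).
  { destruct (Rle_lt_dec b0 a0) as [Hl|Hl]; [lra|].
    assert (a0 ^ mu < b0 ^ mu) by (apply pow_lt_strict; auto; lra). lra. }
  exists a0. split; [exact Hin0|exact Hle].
Qed.

Definition LS (l : list R) (t : R) := lsum (map (fun a => ln (t - a)) l).
Definition DS (l : list R) (k : nat) (t : R) := lsum (map (fun a => / (t - a) ^ k) l).

Lemma lprod_pos l t : (forall a, In a l -> a < t) -> 0 < lprod (map (fun a => t - a) l).
Proof.
  induction l as [|a l IH]; intros H; simpl; [lra|].
  apply Rmult_lt_0_compat. assert (a < t) by (apply H; simpl; auto). lra.
  apply IH; intros; apply H; simpl; auto.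
Qed.

Lemma ln_lprod l t : (forall a, In a l -> a < t) -> ln (lprod (map (fun a => t - a) l)) = LS l t.
Proof.
  unfold LS. induction l as [|a l IH]; intros H; simpl; [apply ln_1|].
  rewrite ln_mult. rewrite IH; auto. intros; apply H; simpl; auto.
  assert (a < t) by (apply H; simpl; auto). lra.
  apply lprod_pos; intros; apply H; simpl; auto.
Qed.

Lemma is_derive_LS l t : (forall a, In a l -> a < t) -> is_derive (LS l) t (DS l 1 t).
Proof.
  unfold LS, DS. induction l as [|a l IH]; intros H; simpl.
  - apply is_der_const.
  - assert (Ha : a < t) by (apply H; simpl; auto).
    assert (H1 : is_derive (fun u => ln (u - a)) t (/ (t - a) ^ 1)).
    { assert (Hg := is_derive_minus (fun u => u) (fun _ => a) t 1 0 (is_derive_id t) (is_der_const a t)).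
      assert (Hc := is_derive_comp ln (fun u => minus u a) t (/ (t - a)) (minus 1 0) (is_derive_ln (t - a) ltac:(lra)) Hg).
      refine (is_der_eq _ _ _ _ Hc _). unfold scal, minus, plus, opp, mult; simpl. change (((1 + - 0) * / (t - a))%R = / ((t - a) * 1)). field. lra. }
    assert (H2 := is_derive_plus _ _ _ _ _ H1 (IH ltac:(intros; apply H; simpl; auto))).
    refine (is_der_eq _ _ _ _ H2 _). reflexivity.
Qed.

Lemma is_derive_DS l k t : (forall a, In a l -> a < t) ->
  is_derive (DS l k) t (- INR k * DS l (S k) t).
Proof.
  unfold DS. induction l as [|a l IH]; intros H; simpl.
  - eapply is_der_eq; [apply is_der_const|]. simpl; ring.
  - assert (Ha : a < t) by (apply H; simpl; auto).
    assert (Hg := is_derive_minus (fun u => u) (fun _ => a) t 1 0 (is_derive_id t) (is_der_const a t)).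
    assert (Hp := is_derive_pow (fun u => minus u a) k t (minus 1 0) Hg).
    assert (Hi := is_derive_inv _ _ _ Hp ltac:(apply pow_nonzero; unfold minus, plus, opp; simpl; lra)).
    assert (H2 := is_derive_plus _ _ _ _ _ Hi (IH ltac:(intros; apply H; simpl; auto))).
    refine (is_der_eq _ _ _ _ H2 _).
    unfold minus, plus, opp; simpl.
    change ((- (INR k * (1 + - 0) * (t + - a) ^ Init.Nat.pred k) / ((t + - a) ^ k) ^ 2 +
      - INR k * lsum (map (fun a0 : R => / (t - a0) ^ (S k)) l))%R =
      - INR k * (/ ((t - a) * (t - a) ^ k) + lsum (map (fun a0 : R => / (t - a0) ^ (S k)) l))).
    assert (t - a <> 0) by lra.
    replace (t + - a) with (t - a) by ring.
    destruct k as [|k].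
    + simpl. field. auto.
    + simpl pred. simpl pow. field. split; auto. apply pow_nonzero; auto.
Qed.

Lemma ln_rat K z p u : 0 < K -> (forall a, In a (p ++ z) -> a < u) ->
  ln (rat_fun K z p u) = ln K + LS z u - LS p u.
Proof.
  intros HK H. unfold rat_fun.
  assert (Hz : forall a, In a z -> a < u) by (intros; apply H; rewrite in_app_iff; auto).
  assert (Hp : forall a, In a p -> a < u) by (intros; apply H; rewrite in_app_iff; auto).
  rewrite ln_div, ln_mult, !ln_lprod; auto.
  apply lprod_pos; auto. apply Rmult_lt_0_compat; auto. apply lprod_pos; auto. apply lprod_pos; auto.
Qed.

Lemma Derive_n_F K z p sigma : 0 < K -> (forall a, In a (p ++ z) -> a <= sigma) ->
  forall k t, sigma < t -> Derive_n (fun t => ln (rat_fun K z p t)) (S k) t =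
    (-1) ^ k * INR (Factorial.fact k) * (DS z (S k) t - DS p (S k) t).
Proof.
  intros HK Hs. induction k as [|k IH]; intros t Ht.
  - simpl Derive_n.
    rewrite (Derive_ext_loc _ (fun u => ln K + LS z u - LS p u)).
    + apply is_derive_unique.
      assert (Hz : forall a, In a z -> a < t) by (intros a Ha; assert (a <= sigma) by (apply Hs; rewrite in_app_iff; auto); lra).
      assert (Hp : forall a, In a p -> a < t) by (intros a Ha; assert (a <= sigma) by (apply Hs; rewrite in_app_iff; auto); lra).
      assert (H1 := is_derive_plus _ _ _ _ _ (is_der_const (ln K) t) (is_derive_LS z t Hz)).
      assert (H2 := is_derive_minus _ _ _ _ _ H1 (is_derive_LS p t Hp)).
      refine (is_der_eq _ _ _ _ H2 _). unfold minus, plus, opp; simpl.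
      change (0 + DS z 1 t + - DS p 1 t = 1 * 1 * (DS z 1 t - DS p 1 t)). ring.
    + apply (filter_imp (fun u => sigma < u)); [|apply open_gt; auto].
      intros u Hu. apply ln_rat; auto. intros a Ha. assert (a <= sigma) by auto. lra.
  - change (Derive (Derive_n (fun t => ln (rat_fun K z p t)) (S k)) t =
      (-1) ^ S k * INR (Factorial.fact (S k)) * (DS z (S (S k)) t - DS p (S (S k)) t)).
    rewrite (Derive_ext_loc _ (fun u => (-1) ^ k * INR (Factorial.fact k) * (DS z (S k) u - DS p (S k) u))).
    + apply is_derive_unique.
      assert (Hz : forall a, In a z -> a < t) by (intros a Ha; assert (a <= sigma) by (apply Hs; rewrite in_app_iff; auto); lra).
      assert (Hp : forall a, In a p -> a < t) by (intros a Ha; assert (a <= sigma) by (apply Hs; rewrite in_app_iff; auto); lra).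
      assert (H2 := is_derive_minus _ _ _ _ _ (is_derive_DS z (S k) t Hz) (is_derive_DS p (S k) t Hp)).
      assert (H3 := is_derive_scal _ _ ((-1) ^ k * INR (Factorial.fact k)) _ H2).
      refine (is_der_eq _ _ _ _ H3 _). unfold minus, plus, opp; simpl.
      change ((-1) ^ k * INR (Factorial.fact k) * (- INR (S k) * DS z (S (S k)) t + - (- INR (S k) * DS p (S (S k)) t)) =
        -1 * (-1) ^ k * INR (Factorial.fact k + k * Factorial.fact k) * (DS z (S (S k)) t - DS p (S (S k)) t)).
      rewrite plus_INR, mult_INR, S_INR. ring.
    + apply (filter_imp (fun u => sigma < u)); [|apply open_gt; auto].
      intros u Hu. rewrite IH; auto.
Qed.

Theorem theorem1 (n : nat) (K : R) (z p : list R)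
  (Hn : (1 <= n)%nat) (Hz : length z = n) (Hp : length p = n)
  (HK : 0 < K) (mu : nat) (Hmu : (1 <= mu)%nat) (delta : R)
  (Hdelta : forall x, In x (p ++ z) -> - x < delta)
  (Hmaj : weak_majorizes (shift_pow p delta mu) (shift_pow z delta mu))
  (Hpow : forall k : nat, (1 <= k <= mu - 1)%nat ->
     lsum (shift_pow p delta k) >= lsum (shift_pow z delta k)) :
  LCM (rat_fun K z p) (sigmaH p).
Proof.
  unfold LCM. intros s Hs.
  set (xs := map (fun a => a + delta) p). set (ys := map (fun a => a + delta) z).
  assert (Hsp : forall j, shift_pow p delta j = map (fun x => x ^ j) xs)
    by (intros j; unfold shift_pow, xs; rewrite map_map; reflexivity).
  assert (Hsz : forall j, shift_pow z delta j = map (fun x => x ^ j) ys)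
    by (intros j; unfold shift_pow, ys; rewrite map_map; reflexivity).
  rewrite Hsp, Hsz in Hmaj.
  assert (Hlen : length xs = length ys) by (unfold xs, ys; rewrite !length_map; lia).
  assert (Hpos : forall x, In x (xs ++ ys) -> 0 < x).
  { intros x Hx. rewrite in_app_iff in Hx. unfold xs, ys in Hx. rewrite !in_map_iff in Hx.
    destruct Hx as [[a [<- Ha]]|[a [<- Ha]]];
    assert (- a < delta) by (apply Hdelta; rewrite in_app_iff; auto); lra. }
  assert (Hple : forall a, In a p -> a <= sigmaH p) by (intros; unfold sigmaH; apply fold_max_ge; auto).
  assert (Hne : xs <> []).
  { unfold xs. destruct p; simpl in Hp; [lia|discriminate]. }
  assert (Hzle : forall a, In a z -> a <= sigmaH p).
  { intros a Ha.
    assert (Hy : In (a + delta) ys) by (unfold ys; apply (in_map (fun b => b + delta)); auto).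
    destruct (maj_max mu xs ys Hmu Hne Hlen Hpos Hmaj _ Hy) as [x [Hx Hax]].
    unfold xs in Hx. apply in_map_iff in Hx. destruct Hx as [b [<- Hb]].
    assert (b <= sigmaH p) by auto. lra. }
  assert (Hall : forall a, In a (p ++ z) -> a <= sigmaH p).
  { intros a Ha; rewrite in_app_iff in Ha; destruct Ha; auto. }
  split.
  - unfold rat_fun. unfold Rdiv. apply Rmult_gt_0_compat; [apply Rmult_gt_0_compat|].
    + exact HK.
    + apply lprod_pos. intros a Ha. assert (a <= sigmaH p) by auto. lra.
    + apply Rinv_0_lt_compat. apply lprod_pos. intros a Ha. assert (a <= sigmaH p) by auto. lra.
  - intros k Hk. destruct k as [|k]; [lia|].
    rewrite (Derive_n_F K z p (sigmaH p) HK Hall k s Hs).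
    set (T := s + delta).
    assert (HD : forall l, DS l (S k) s = lsum (map (fun x => / (T - x) ^ (S k)) (map (fun a => a + delta) l))).
    { intros l. unfold DS. rewrite map_map. f_equal. apply map_ext. intros a. unfold T.
      replace (s + delta - (a + delta)) with (s - a) by ring. reflexivity. }
    assert (Hineq : DS p (S k) s >= DS z (S k) s).
    { rewrite !HD. fold xs ys. apply ineq_main with (mu := mu); auto.
      - intros x Hx. split; [apply Hpos; auto|].
        rewrite in_app_iff in Hx. unfold xs, ys in Hx. rewrite !in_map_iff in Hx. unfold T.
        destruct Hx as [[a [<- Ha]]|[a [<- Ha]]];
        assert (a <= sigmaH p) by auto; lra.
      - intros j Hj. rewrite <- Hsp, <- Hsz. apply Hpow; auto. }
    assert (Hf : 0 <= INR (Factorial.fact k)) by apply pos_INR.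
    assert (Hsq : (-1) ^ k * (-1) ^ k = 1).
    { rewrite <- Rpow_mult_distr. replace (-1 * -1) with 1 by ring. apply pow1. }
    change ((-1) ^ (S k)) with (-1 * (-1) ^ k).
    replace (-1 * (-1) ^ k * ((-1) ^ k * INR (Factorial.fact k) * (DS z (S k) s - DS p (S k) s)))
      with (((-1) ^ k * (-1) ^ k) * INR (Factorial.fact k) * (DS p (S k) s - DS z (S k) s)) by ring.
    rewrite Hsq. apply Rle_ge. apply Rmult_le_pos; lra.
Qed.
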